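(* Let $R$ be a graded ring and $\mathfrak p\in\operatorname{Spec}^h(R)$ a homogeneous prime ideal. Then the period of the local graded ring $R_{\mathfrak p}$ equals \[ \gcd\bigl(\deg(f)\ \bigm\vert\ f\in R \text{ homogeneous},\ f\notin\mathfrak p,\ \deg(f)\ne0\bigr), \] with the convention $\gcd(\emptyset)=0$.
   Context: A graded ring is a $\mathbb Z$-graded ring $R=\bigoplus_{d\in\mathbb Z}R_d$ (a monoid in graded abelian groups) for which there is $\epsilon\in R_0^\times$ with $rs=\epsilon^{\deg(r)\deg(s)}sr$ for homogeneous $r,s$. $R_{\mathfrak p}$ is the localization at the homogeneous elements not in $\mathfrak p$. The period of a graded ring $S$ is the smallest $d>0$ such that $S_d$ contains a unit, or $0$ if no unit of positive degree exists. *)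

(* Defs.v *)
From HB Require Import structures.
From mathcomp Require Import all_boot all_order all_algebra.
Set Implicit Arguments. Unset Strict Implicit. Unset Printing Implicit Defensive.
Import Order.TTheory GRing.Theory Num.Theory.
Local Open Scope ring_scope.

(* A Z-graded ring: a ring R together with its homogeneous components
   G d (d : int), forming a direct-sum decomposition R = (+)_d G d,
   with G d * G e <= G (d+e), 1 \in G 0, and an eps \in (G 0)^x such that
   r s = eps^(deg r * deg s) s r for homogeneous r, s. *)
Record is_graded_ring (R : unitRingType) (G : int -> pred R) : Prop := {
  gr_zero  : forall d, 0 \in G d;
  gr_sub   : forall d x y, x \in G d -> y \in G d -> x - y \in G d;
  gr_one   : 1 \in G 0;
  gr_mul   : forall d e x y, x \in G d -> y \in G e -> x * y \in G (d + e);
  gr_span  : forall r : R, exists (s : seq int) (f : int -> R),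
               (forall d, f d \in G d) /\ r = \sum_(d <- s) f d;
  gr_direct : forall (s : seq int) (f : int -> R), uniq s ->
               (forall d, f d \in G d) -> \sum_(d <- s) f d = 0 ->
               forall d, d \in s -> f d = 0;
  gr_eps   : exists eps : R, [/\ eps \in G 0, eps \is a GRing.unit &
               forall d e r s, r \in G d -> s \in G e ->
                 r * s = eps ^ (d * e) * (s * r)]
}.

Definition homog (R : unitRingType) (G : int -> pred R) (r : R) : Prop :=
  exists d, r \in G d.

Record is_hprime (R : unitRingType) (G : int -> pred R) (p : pred R) : Prop := {
  hp_zero  : 0 \in p;
  hp_sub   : forall x y, x \in p -> y \in p -> x - y \in p;
  hp_mull  : forall r x, x \in p -> r * x \in p;
  hp_mulr  : forall r x, x \in p -> x * r \in p;
  hp_homog : forall (s : seq int) (f : int -> R), uniq s ->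
               (forall d, f d \in G d) -> \sum_(d <- s) f d \in p ->
               forall d, d \in s -> f d \in p;
  hp_proper : 1 \notin p;
  hp_prime : forall a b, homog G a -> homog G b -> a * b \in p ->
               a \in p \/ b \in p
}.

Definition hS (R : unitRingType) (G : int -> pred R) (p : pred R) (s : R) :=
  homog G s /\ s \notin p.

(* phi : R -> L is (a model of) the graded localization R_p of R at the
   homogeneous elements not in p: a graded ring morphism inverting S such
   that every element of L is a fraction phi r / phi s (s \in S) and the
   kernel of phi is {r | r s = 0 for some s \in S}. *)
Record is_hlocalization (R L : unitRingType) (G : int -> pred R)
    (p : pred R) (H : int -> pred L) (phi : {rmorphism R -> L}) : Prop := {
  hl_graded : forall d r, r \in G d -> phi r \in H d;
  hl_unit   : forall s, hS G p s -> phi s \is a GRing.unit;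
  hl_frac   : forall x : L, exists r s, hS G p s /\ x = phi r / phi s;
  hl_ker    : forall r, phi r = 0 -> exists s, hS G p s /\ r * s = 0
}.

Definition is_period (L : unitRingType) (H : int -> pred L) (n : nat) : Prop :=
  (n = 0%N /\ forall (m : nat) (x : L), (0 < m)%N -> x \in H m ->
                                       x \isn't a GRing.unit)
  \/ [/\ (0 < n)%N,
         exists x : L, x \in H n /\ x \is a GRing.unit
       & forall (m : nat) (x : L), (0 < m < n)%N -> x \in H m ->
                                  x \isn't a GRing.unit].

(* g (>= 0) is the gcd of the set D of integers (so gcd(empty) = 0). *)
Definition is_gcd_set (D : int -> Prop) (g : nat) : Prop :=
  (forall d, D d -> (g%:Z %| d)%Z) /\
  (forall c : int, (forall d, D d -> (c %| d)%Z) -> (c %| g%:Z)%Z).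

(* Main.v *)
Require Import Defs.
From HB Require Import structures.
From mathcomp Require Import all_boot all_order all_algebra.
From Stdlib Require Import Classical.
Import Order.TTheory GRing.Theory Num.Theory.
Set Implicit Arguments. Unset Strict Implicit. Unset Printing Implicit Defensive.
Local Open Scope ring_scope.

Lemma gr_add (R : unitRingType) (G : int -> pred R) (hG : is_graded_ring G) d x y :
  x \in G d -> y \in G d -> x + y \in G d.
Proof.
move=> hx hy; have h0 : 0 - y \in G d by apply: (gr_sub hG) => //; apply: gr_zero.
by have := gr_sub hG hx h0; rewrite sub0r opprK.
Qed.

Lemma gr_natmul (R : unitRingType) (G : int -> pred R) (hG : is_graded_ring G) d x n :
  x \in G d -> x *+ n \in G d.
Proof.
move=> hx; elim: n => [|n IH]; first exact: gr_zero.
by rewrite mulrS; apply: gr_add.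
Qed.

Lemma gr_span_uniq (R : unitRingType) (G : int -> pred R) (hG : is_graded_ring G) r :
  exists (s : seq int) (f : int -> R),
    [/\ uniq s, (forall d, f d \in G d) & r = \sum_(d <- s) f d].
Proof.
have [s [f [hf ->]]] := gr_span hG r.
exists (undup s), (fun d => f d *+ count_mem d s); split.
- exact: undup_uniq.
- by move=> d; apply: gr_natmul.
- by rewrite -big_undup_iterop_count.
Qed.

Lemma comp_shift (R : unitRingType) (G : int -> pred R) (hG : is_graded_ring G)
  (s : seq int) (f : int -> R) (c d : int) (x : R) :
  uniq s -> (forall k, f k \in G (c + k)) -> x \in G d ->
  \sum_(k <- s) f k = x -> x != 0 ->
  exists k, [/\ k \in s, c + k = d & f k = x].
Proof.
move=> us hf hx hsum hx0.
pose s' := map (fun k => c + k) s.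
pose g := fun j => f (j - c).
have hg : forall j, g j \in G j.
  by move=> j; have := hf (j - c); rewrite addrCA subrr addr0.
have us' : uniq s' by rewrite map_inj_uniq //; apply: addrI.
have hs' : \sum_(j <- s') g j = x.
  by rewrite big_map -hsum; apply: eq_bigr => k _; rewrite /g (addrC c) addrK.
have dins : d \in s'.
  apply/negPn/negP => dn.
  pose h := fun j => if j == d then - x else g j.
  have uh : uniq (d :: s') by rewrite /= dn.
  have hh : forall j, h j \in G j.
    move=> j; rewrite /h; case: eqP => [->|_]; last exact: hg.
    by have := gr_sub hG (gr_zero hG d) hx; rewrite sub0r.
  have hsum0 : \sum_(j <- d :: s') h j = 0.
    rewrite big_cons /h eqxx.
    rewrite (eq_big_seq g); first by rewrite hs' addNr.
    by move=> j js; case: eqP => // ejd; rewrite -ejd js in dn.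
  have := gr_direct hG uh hh hsum0 (mem_head _ _).
  by rewrite /h eqxx => /eqP; rewrite oppr_eq0 (negbTE hx0).
pose t := filter (fun j => j != d) s'.
pose h := fun j => if j == d then g d - x else g j.
have ut : uniq (d :: t) by rewrite /= mem_filter eqxx /= filter_uniq.
have hh : forall j, h j \in G j.
  by move=> j; rewrite /h; case: eqP => [->|_]; [apply: (gr_sub hG) | exact: hg].
have hsum0 : \sum_(j <- d :: t) h j = 0.
  rewrite big_cons /h eqxx.
  have -> : \sum_(j <- t) (if j == d then g d - x else g j) = \sum_(j <- t) g j.
    by apply: eq_big_seq => j; rewrite mem_filter => /andP [/negbTE -> _].
  by rewrite /t big_filter addrAC -bigD1_seq // hs' subrr.
have := gr_direct hG ut hh hsum0 (mem_head _ _).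
rewrite /h eqxx => /eqP; rewrite subr_eq0 => /eqP gdx.
move: dins => /mapP [k ks dk].
exists k; split; [exact: ks | by rewrite dk | ].
by rewrite -gdx /g dk addrC addKr.
Qed.
Lemma inv_homog (L : unitRingType) (H : int -> pred L) (hH : is_graded_ring H) e u :
  u \in H e -> u \is a GRing.unit -> u^-1 \in H (- e).
Proof.
move=> hu uu.
have [s [v [us hv hsum]]] := gr_span_uniq hH (u^-1).
have hf : forall k, u * v k \in H (e + k) by move=> k; apply: (gr_mul hH).
have hs : \sum_(k <- s) u * v k = 1 by rewrite -mulr_sumr -hsum mulrV.
have [k [ks ek uk]] := comp_shift hH us hf (gr_one hH) hs (oner_neq0 _).
have -> : - e = k by rewrite -(addKr e k) ek addr0.
have -> : u^-1 = v k by rewrite -[v k](mulKr uu) uk mulr1.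
exact: hv.
Qed.

Lemma unit_degrees (R L : unitRingType) (G : int -> pred R) (p : pred R)
  (H : int -> pred L) (phi : {rmorphism R -> L}) :
  is_graded_ring G -> is_hprime G p -> is_graded_ring H -> is_hlocalization G p H phi ->
  forall m x, x \in H m -> x \is a GRing.unit ->
  exists a b f1 f2, [/\ f1 \in G a, f1 \notin p, f2 \in G b, f2 \notin p & m = a - b].
Proof.
move=> hG hp hH hl m x hx ux.
have [r [s [[[e se] sp] xe]]] := hl_frac hl x.
have us : phi s \is a GRing.unit by apply: (hl_unit hl); split => //; exists e.
have pr : phi r = x * phi s by rewrite xe divrK.
have hxs : x * phi s \in H (m + e) by apply: (gr_mul hH) => //; apply: (hl_graded hl).
have uxs : x * phi s \is a GRing.unit by rewrite unitrMl.
have nz : x * phi s != 0 by apply: contraTneq uxs => ->; rewrite unitr0.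
have [sr [rf [usr hrf rsum]]] := gr_span_uniq hG r.
have hf : forall k, phi (rf k) \in H (0 + k) by move=> k; rewrite add0r; apply: (hl_graded hl).
have hsum : \sum_(k <- sr) phi (rf k) = x * phi s by rewrite -pr rsum rmorph_sum.
have [k [ks ek phik]] := comp_shift hH usr hf hxs hsum nz.
rewrite add0r in ek; subst k.
exists (m + e), e, (rf (m + e)), s; split => //; last by rewrite addrK.
apply/negP => rp.
set r' := rf (m + e) in rp phik.
have ur' : phi r' \is a GRing.unit by rewrite phik.
have [a [t [[[dt tG] tp] ye]]] := hl_frac hl ((phi r')^-1).
have ut : phi t \is a GRing.unit by apply: (hl_unit hl); split => //; exists dt.
have e1 : phi r' * phi a = phi t.
  have : phi r' * (phi r')^-1 * phi t = phi t by rewrite mulrV // mul1r.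
  by rewrite ye mulrA divrK.
have : phi (r' * a - t) = 0 by rewrite rmorphB rmorphM e1 subrr.
move=> /(hl_ker hl) [s' [[[ds' s'G] s'p] e2]].
have e3 : r' * a * s' = t * s' by apply/eqP; rewrite -subr_eq0 -mulrBl e2.
have ts'p : t * s' \notin p.
  apply/negP => /(hp_prime hp) [] //; [by exists dt | by exists ds' | |];
    by apply/negP.
have ts'nz : t * s' != 0 by apply: contraNneq ts'p => ->; apply: (hp_zero hp).
have ts'G : t * s' \in G (dt + ds') by apply: (gr_mul hG).
have [sa [af [usa haf asum]]] := gr_span_uniq hG a.
have hf2 : forall k, r' * af k * s' \in G ((m + e + ds') + k).
  move=> k; rewrite addrAC; apply: (gr_mul hG) => //; apply: (gr_mul hG) => //.
  by rewrite /r'.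
have hsum2 : \sum_(k <- sa) r' * af k * s' = t * s'.
  by rewrite -e3 asum mulr_sumr mulr_suml.
have [k [_ _ ek2]] := comp_shift hG usa hf2 ts'G hsum2 ts'nz.
move: ts'p; rewrite -ek2 => /negP; apply.
by apply: (hp_mulr hp); apply: (hp_mulr hp).
Qed.

Lemma ex_minP (P : nat -> Prop) m0 : P m0 -> exists m, P m /\ forall k, (k < m)%N -> ~ P k.
Proof.
move=> h; apply: NNPP => hn.
suff: forall n k, (k <= n)%N -> ~ P k by move/(_ m0 m0 (leqnn _)).
elim=> [|n IH] k hk Pk.
- apply: hn; exists k; split => // j jk; by move: (leq_trans jk hk).
- apply: hn; exists k; split => // j jk Pj; apply: (IH j) Pj.
  by rewrite -ltnS (leq_trans jk hk).
Qed.

Lemma U_zmul (L : unitRingType) (H : int -> pred L) (hH : is_graded_ring H) n x :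
  x \in H n -> x \is a GRing.unit ->
  forall z : int, exists y, y \in H (z * n) /\ y \is a GRing.unit.
Proof.
move=> hx ux.
have hnat : forall k : nat, exists y, y \in H (k%:Z * n) /\ y \is a GRing.unit.
  elim=> [|k [y [hy uy]]]; first by exists 1; rewrite mul0r unitr1; split=> //; apply: gr_one.
  exists (x * y); split; last by rewrite unitrMl.
  by rewrite intS mulrDl mul1r; apply: (gr_mul hH).
case=> k; first exact: hnat.
have [y [hy uy]] := hnat k.+1.
exists y^-1; split; last by rewrite unitrV.
by rewrite NegzE mulNr; apply: inv_homog.
Qed.

Theorem proposition2p14 (R : unitRingType) (G : int -> pred R) (p : pred R)
  (L : unitRingType) (H : int -> pred L) (phi : {rmorphism R -> L}) :
  is_graded_ring G -> is_hprime G p ->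
  is_graded_ring H -> is_hlocalization G p H phi ->
  forall n : nat,
    is_period H n <->
    is_gcd_set (fun d : int => exists f : R, [/\ f \in G d, f \notin p & d != 0]) n.
Proof.
move=> hG hp hH hl.
set D := fun d : int => exists f : R, [/\ f \in G d, f \notin p & d != 0].
have UD : forall d f, f \in G d -> f \notin p ->
    phi f \in H d /\ phi f \is a GRing.unit.
  move=> d f fG fp; split; first exact: (hl_graded hl).
  by apply: (hl_unit hl); split => //; exists d.
have Udvd : forall c : int, (forall d, D d -> (c %| d)%Z) ->
    forall m x, x \in H m -> x \is a GRing.unit -> (c %| m)%Z.
  move=> c hc m x hx ux.
  have [a [b [f1 [f2 [f1G f1p f2G f2p ->]]]]] := unit_degrees hG hp hH hl hx ux.
  have dv : forall a f, f \in G a -> f \notin p -> (c %| a)%Z.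
    move=> a' f fG fp; have [->|a0] := eqVneq a' 0; first exact: dvdz0.
    by apply: hc; exists f.
  by apply: rpredB; [apply: (dv a f1) | apply: (dv b f2)].
have fwd : forall n, is_period H n -> is_gcd_set D n.
  move=> n [[-> none]|[npos [x [hx ux]] minimal]]; split.
  - move=> d [f [fG fp d0]]; exfalso.
    have [hf uf] := UD d f fG fp.
    case: d d0 fG hf => m d0 fG hf.
    + have mpos : (0 < m)%N by rewrite lt0n; apply: contraNneq d0 => ->.
      by move: (none m (phi f) mpos hf); rewrite uf.
    + have hi : (phi f)^-1 \in H (m.+1)%:Z by rewrite -[_%:Z]opprK -NegzE; apply: inv_homog.
      by move: (none m.+1 _ (ltn0Sn m) hi); rewrite unitrV uf.
  - by move=> c _; apply: dvdz0.
  - move=> d [f [fG fp d0]].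
    have [hf uf] := UD d f fG fp.
    have [y [hy uy]] := U_zmul hH hx ux (- (d %/ n)%Z).
    have n0 : (n%:Z != 0) by apply/negP => /eqP [] n0'; rewrite n0' in npos.
    have hz : phi f * y \in H (d %% n)%Z.
      have <- : d + - (d %/ n)%Z * n = (d %% n)%Z.
        by rewrite {1}(divz_eq d n) mulNr addrAC subrr add0r.
      by apply: (gr_mul hH).
    have uz : phi f * y \is a GRing.unit by rewrite unitrMl.
    have r0 := modz_ge0 d n0; have rn := ltz_mod d n0.
    apply/dvdz_mod0P; move: r0 rn hz uz.
    generalize (modz d (Posz n)); case => [k|k] //= _ kn hz uz.
    have [->|k0] := eqVneq k 0%N; first by [].
    have kk : (0 < k < n)%N.
      by rewrite lt0n k0 /=; move: kn; rewrite ltz_nat.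
    by move: (minimal k _ kk hz); rewrite uz.
  - by move=> c hc; apply: Udvd hc n x hx ux.
have exP : exists g, is_period H g.
  have [[m [mpos [x [hx ux]]]]|no] :=
    classic (exists m : nat, (0 < m)%N /\ exists x, x \in H m /\ x \is a GRing.unit).
  - have [g [[gpos hg] gmin]] := ex_minP (P := fun m : nat => (0 < m)%N /\
        exists x, x \in H m /\ x \is a GRing.unit) (conj mpos (ex_intro _ x (conj hx ux))).
    exists g; right; split => // k y /andP [kpos kg] hy; apply/negP => uy.
    by apply: (gmin k kg); split => //; exists y.
  - exists 0%N; left; split => // k y kpos hy; apply/negP => uy.
    by apply: no; exists k; split => //; exists y.
move=> n; split; first exact: fwd.
move=> gn; have [g pg] := exP; have gg := fwd g pg.
have h1 := gg.2 _ gn.1; have h2 := gn.2 _ gg.1.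
rewrite !dvdzE /= in h1 h2.
suff -> : n = g by [].
by apply/eqP; rewrite eqn_dvd h1 h2.
Qed.
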